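(* In the M/M/1 setting below, for every belief distribution $\Lambda$ satisfying the standing assumptions, $q^S_m\le q^S_e$.
   Context: Setting: an M/M/1 queue with true (deterministic) Poisson arrival rate $\lambda>0$ and exponential service times with rate $\mu$, so the expected time in system at effective arrival rate $x\in[0,\mu)$ is $W(x)=1/(\mu-x)$. Each served customer receives reward $R$ and incurs waiting cost $C>0$ per unit time, with $R\ge C/\mu$. Customers' beliefs about the arrival rate are described by a non-degenerate nonnegative random variable $\Lambda$ whose support has minimum $\lambda_{\min}$ and maximum $\lambda_{\max}$, with $0\le\lambda_{\min}<\lambda<\lambda_{\max}<\mu$. Shared-belief quantities, for $q\in[0,1]$: the revenue rate $\mathrm{Rev}^S(q)=q\lambda\,\mathbb{E}[R-C\,W(q\Lambda)]$ (strictly concave on $[0,1]$); $q^S_m$ is the maximizer of $\mathrm{Rev}^S$ over $q\in[0,1]$. The individual (no-fee) equilibrium $q^S_e$ is defined as follows: if $R-C\,\mathbb{E}[W(\Lambda)]\ge0$ then $q^S_e=1$; otherwise $q^S_e$ is the unique $q\in[0,1]$ with $C\,\mathbb{E}[W(q\Lambda)]=R$. *)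

(* Defs.v *)
(* beliefs are a real random variable on an abstract probability space. *)
From HB Require Import structures.
From mathcomp Require Import all_boot all_order all_algebra.
From mathcomp Require Import all_classical all_reals all_analysis.
Set Implicit Arguments. Unset Strict Implicit. Unset Printing Implicit Defensive.
Import Order.TTheory GRing.Theory Num.Theory.
Local Open Scope classical_set_scope.
Local Open Scope ring_scope.

Section mm1.
Context {d : measure_display} {T : measurableType d} {R : realType}.

(* expected time in system of an M/M/1 queue at effective arrival rate x *)
Definition Wsys (mu x : R) : R := 1 / (mu - x).

Definition rv_support (P : probability T R) (X : {RV P >-> R}) : set R :=
  [set x | forall e : R, 0 < e ->
    (0 < distribution P X `](x - e)%R, (x + e)%R[)%E].

Definition EW (P : probability T R) (X : {RV P >-> R}) (mu q : R) : R :=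
  fine ('E_P[fun w => Wsys mu (q * X w)%R])%E.

Definition RevS (P : probability T R) (X : {RV P >-> R}) (lam mu Rw C q : R) : R :=
  q * lam * fine ('E_P[fun w => (Rw - C * Wsys mu (q * X w))%R])%E.

Definition is_qSm (P : probability T R) (X : {RV P >-> R}) (lam mu Rw C q : R) : Prop :=
  0 <= q <= 1 /\
  forall q' : R, 0 <= q' <= 1 -> RevS X lam mu Rw C q' <= RevS X lam mu Rw C q.

Definition is_qSe (P : probability T R) (X : {RV P >-> R}) (mu Rw C q : R) : Prop :=
  (0 <= Rw - C * EW X mu 1 /\ q = 1) \/
  (Rw - C * EW X mu 1 < 0 /\ 0 <= q <= 1 /\ C * EW X mu q = Rw).

End mm1.

(* Main.v *)
Require Import Defs.
From HB Require Import structures.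
From mathcomp Require Import all_boot all_order all_algebra.
From mathcomp Require Import all_classical all_reals all_analysis.
From mathcomp Require Import measurable_realfun.
From mathcomp Require Import lra ring.
Import Order.TTheory GRing.Theory Num.Theory.
Local Open Scope classical_set_scope.
Local Open Scope ring_scope.
Lemma measurable_inv {R : realType} : measurable_fun [set: R] (fun x : R => x^-1).
Proof.
have H : {in [set: R], (fun x : R => if 0 < x then powR x (-1) else
   if x < 0 then - powR (- x) (-1) else 0) =1 (fun x : R => x^-1)}.
  move=> x _.
  have [x0|x0|->] := ltgtP x 0.
  - by rewrite powR_inv1 ?invrN ?opprK // oppr_ge0 ltW.
  - by rewrite powR_inv1 // ltW.
  - by rewrite invr0.
apply/(measurable_fun_eqP _ H).
apply: measurable_fun_ifT.
- by apply: measurable_fun_ltr.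
- exact: measurable_powR.
apply: measurable_fun_ifT.
- by apply: measurable_fun_ltr.
- apply: (measurable_funN (f := fun x : R => (- x) `^ (-1))).
  apply: (measurableT_comp (f := fun x : R => x `^ (-1)) (g := fun x : R => - x)).
    exact: measurable_powR.
  exact: measurable_funN.
- exact: measurable_cst.
Qed.

Lemma pw_key {R : realType} (mu lmax q qe x : R) : 0 <= lmax -> lmax < mu ->
  0 <= qe -> qe <= q -> q <= 1 -> 0 <= x -> x <= lmax ->
  Wsys mu (qe * x) + (q - qe) * ((mu - lmax) / mu) * (Wsys mu (1 * x) - mu^-1)
  <= Wsys mu (q * x).
Proof.
move=> l0 lmu qe0 qeq q1 x0 xl.
have mu0 : 0 < mu by apply: le_lt_trans l0 lmu.
have q0 : 0 <= q by apply: le_trans qe0 qeq.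
have qx : q * x <= x by rewrite -[X in _ <= X]mul1r ler_wpM2r.
have qex : qe * x <= q * x by rewrite ler_wpM2r.
have qex0 : 0 <= qe * x by rewrite mulr_ge0.
have a0 : 0 < mu - q * x by lra.
have b0 : 0 < mu - qe * x by nra.
have c0 : 0 < mu - x by lra.
rewrite /Wsys !div1r mul1r -subr_ge0.
have -> : (mu - q * x)^-1 - ((mu - qe * x)^-1 + (q - qe) * ((mu - lmax) / mu) * ((mu - x)^-1 - mu^-1))
  = (q - qe) * x * (mu ^+ 2 * (mu - x) - (mu - lmax) * (mu - q * x) * (mu - qe * x)) /
    ((mu - q * x) * (mu - qe * x) * (mu - x) * mu ^+ 2).
  field.
  by rewrite !gt_eqF.
apply: divr_ge0; last by rewrite !mulr_ge0 ?ltW // exprn_ge0 // ltW.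
apply: mulr_ge0; first by rewrite mulr_ge0 // subr_ge0.
have hab : (mu - q * x) * (mu - qe * x) <= mu ^+ 2.
  rewrite expr2; apply: ler_pM; lra.
rewrite subr_ge0.
have h1 : (mu - lmax) * ((mu - q * x) * (mu - qe * x)) <= (mu - lmax) * mu ^+ 2.
  by apply: ler_wpM2l; lra.
have h2 : (mu - lmax) * mu ^+ 2 <= (mu - x) * mu ^+ 2.
  by apply: ler_wpM2r; [rewrite exprn_ge0 // ltW | lra].
rewrite mulrA in h1; lra.
Qed.

Section aux.
Context {R : realType}.

Lemma supp_upper (Q : {measure set R -> \bar R}) (b : R) :
  (forall x, (forall e : R, 0 < e -> (0 < Q `](x - e)%R, (x + e)%R[%classic)%E) -> x <= b) ->
  Q `]b, +oo[%classic = 0%E.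
Proof.
move=> H.
apply: contrapT => Qb.
have [n Qn] : exists n : nat, Q `]b + n.+1%:R^-1, b + n.+1%:R]%classic != 0%E.
  apply: contrapT => /forallNP Hn; apply: Qb.
  apply: (measure_negligible (measurable_itv _)).
  apply: (negligibleS _ (negligible_bigcup (F := fun n : nat => `]b + n.+1%:R^-1, b + n.+1%:R]%classic) _)).
    move=> x /=; rewrite in_itv /= andbT => bx.
    have xb : 0 < x - b by rewrite subr_gt0.
    have [m [hm1 hm2]] : exists m : nat, (x - b)^-1 < m.+1%:R /\ x - b <= m.+1%:R.
      exists (Num.trunc ((x - b)^-1 + (x - b))).
      have h := truncnS_gt ((x - b)^-1 + (x - b)).
      have hi : 0 < (x - b)^-1 by rewrite invr_gt0.
      split.
        by apply: (le_lt_trans _ h); rewrite lerDl ltW.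
      by apply/ltW/(le_lt_trans _ h); rewrite lerDr ltW.
    exists m => //=; rewrite in_itv /=; apply/andP; split.
      rewrite -ltrBrDl; rewrite -(invrK (x - b)) ltf_pV2 ?posrE //.
      by rewrite invr_gt0.
    by rewrite -lerBlDl.
  move=> k; apply/negligibleP; first exact: measurable_itv.
  by move: (Hn k) => /negP/negbNE/eqP.
set t0 := b + n.+1%:R^-1; set N := b + n.+1%:R.
have bt0 : b < t0 by rewrite /t0 ltrDl invr_gt0 ltr0n.
pose S := [set t | t0 <= t /\ Q `]t, N]%classic != 0%E].
have S0 : S t0 by split.
have hS : has_sup S.
  split; first by exists t0.
  exists N => t [_ Qt]; rewrite leNgt; apply/negP => Nt; move: Qt.
  by rewrite set_itv_ge ?measure0 ?eqxx // bnd_simp -leNgt ltW.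
set s := sup S.
have t0s : t0 <= s by exact: sup_upper_bound.
have : s <= b; last by move=> sb; have := lt_le_trans bt0 t0s; rewrite ltNge sb.
apply: H => e e0.
have [t [t0t Qt] st] := sup_adherent e0 hS.
have e20 : 0 < e / 2 by rewrite divr_gt0.
have Q2 : Q `](s + e / 2), N]%classic = 0%E.
  apply: contrapT => /eqP hQ.
  have : S (s + e / 2) by split => //; rewrite (le_trans t0s) // lerDl ltW.
  move/sup_upper_bound => /(_ hS); rewrite -/s => /=.
  by rewrite gerDl leNgt e20.
have sub : `]t, N]%classic `<=` `](s - e), (s + e)[%classic `|` `](s + e / 2), N]%classic.
  move=> y /=; rewrite !in_itv /= => /andP[ty yN].
  have [ye|ye] := ltP y (s + e).
    by left; rewrite andbT (lt_trans st ty).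
  right; rewrite yN andbT (lt_le_trans _ ye) //.
  by rewrite ltrD2l ltr_pdivrMr // ltr_pMr // ltr1n.
rewrite lt0e measure_ge0 andbT.
apply: contra Qt => /eqP Qse.
rewrite -measure_le0 -Qse -[X in (_ <= X)%E](measureU0 _ _ Q2) //.
by apply: le_measure => //; rewrite inE //; apply: measurableU.
Qed.

Lemma supp_lower (Q : {measure set R -> \bar R}) (b : R) :
  (forall x, (forall e : R, 0 < e -> (0 < Q `](x - e)%R, (x + e)%R[%classic)%E) -> b <= x) ->
  Q `]-oo, b[%classic = 0%E.
Proof.
move=> H.
apply: contrapT => Qb.
have [n Qn] : exists n : nat, Q `[b - n.+1%:R, b - n.+1%:R^-1[%classic != 0%E.
  apply: contrapT => /forallNP Hn; apply: Qb.
  apply: (measure_negligible (measurable_itv _)).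
  apply: (negligibleS _ (negligible_bigcup (F := fun n : nat => `[b - n.+1%:R, b - n.+1%:R^-1[%classic) _)).
    move=> x /=; rewrite in_itv /= => bx.
    have xb : 0 < b - x by rewrite subr_gt0.
    have [m [hm1 hm2]] : exists m : nat, (b - x)^-1 < m.+1%:R /\ b - x <= m.+1%:R.
      exists (Num.trunc ((b - x)^-1 + (b - x))).
      have h := truncnS_gt ((b - x)^-1 + (b - x)).
      have hi : 0 < (b - x)^-1 by rewrite invr_gt0.
      split.
        by apply: (le_lt_trans _ h); rewrite lerDl ltW.
      by apply/ltW/(le_lt_trans _ h); rewrite lerDr ltW.
    exists m => //=; rewrite in_itv /=; apply/andP; split.
      by rewrite lerBlDr addrC -lerBlDr.
    rewrite ltrBrDr addrC -ltrBrDr; rewrite -(invrK (b - x)) ltf_pV2 ?posrE //.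
    by rewrite invr_gt0.
  move=> k; apply/negligibleP; first exact: measurable_itv.
  by move: (Hn k) => /negP/negbNE/eqP.
set t0 := b - n.+1%:R^-1; set N := b - n.+1%:R.
have bt0 : t0 < b by rewrite /t0 ltrBlDr ltrDl invr_gt0 ltr0n.
pose S := [set t | t <= t0 /\ Q `[N, t[%classic != 0%E].
have S0 : S t0 by split.
have hS : has_inf S.
  split; first by exists t0.
  exists N => t [_ Qt]; rewrite leNgt; apply/negP => Nt; move: Qt.
  by rewrite set_itv_ge ?measure0 ?eqxx // bnd_simp -leNgt ltW.
set s := inf S.
have t0s : s <= t0 by exact: ge_inf (proj2 hS) _ S0.
have : b <= s; last by move=> sb; have := le_lt_trans t0s bt0; rewrite ltNge sb.
apply: H => e e0.
have [t [t0t Qt] st] := inf_adherent e0 hS.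
have e20 : 0 < e / 2 by rewrite divr_gt0.
have Q2 : Q `[N, (s - e / 2)[%classic = 0%E.
  apply: contrapT => /eqP hQ.
  have : S (s - e / 2) by split => //; rewrite (le_trans _ t0s) // gerBl ltW.
  move/(ge_inf (proj2 hS)); rewrite -/s => /=.
  by rewrite lerBrDr gerDl leNgt e20.
have sub : `[N, t[%classic `<=` `](s - e), (s + e)[%classic `|` `[N, (s - e / 2)[%classic.
  move=> y /=; rewrite !in_itv /= => /andP[yN ty].
  have [ye|ye] := ltP (s - e) y.
    by left; rewrite (lt_trans ty st).
  right; rewrite yN /= (le_lt_trans ye) //.
  by rewrite ltrD2l ltrN2 ltr_pdivrMr // ltr_pMr // ltr1n.
rewrite lt0e measure_ge0 andbT.
apply: contra Qt => /eqP Qse.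
rewrite -measure_le0 -Qse -[X in (_ <= X)%E](measureU0 _ _ Q2) //.
by apply: le_measure => //; rewrite inE //; apply: measurableU.
Qed.
End aux.

Section main.
Context d (T : measurableType d) (R : realType) (P : probability T R)
  (Lam : {RV P >-> R}) (mu lmax : R).
Hypotheses (l0 : 0 <= lmax) (lmu : lmax < mu)
  (hae : \forall w \ae P, 0 <= Lam w <= lmax).

Definition clamp (x : R) := Num.min (Num.max x 0) lmax.

Lemma clamp_ge0 x : 0 <= clamp x.
Proof. by rewrite /clamp le_min l0 le_max lexx orbT. Qed.

Lemma clamp_le x : clamp x <= lmax.
Proof. by rewrite /clamp ge_min lexx orbT. Qed.

Lemma clamp_id x : 0 <= x <= lmax -> clamp x = x.
Proof. by case/andP=> x0 xl; rewrite /clamp max_l // min_l. Qed.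

Lemma mclamp : measurable_fun [set: R] clamp.
Proof.
apply: measurable_minr => //; apply: measurable_maxr => //.
Qed.

Lemma mWq q : measurable_fun [set: R] (fun x : R => Wsys mu (q * x)).
Proof.
rewrite /Wsys.
apply: (measurable_funM (f := cst 1) (g := fun x : R => (mu - q * x)^-1)) => //.
apply: (measurableT_comp (f := fun x : R => x^-1) (g := fun x : R => mu - q * x)).
  exact: measurable_inv.
apply: (measurable_funB (f := cst mu) (g := fun x : R => q * x)) => //.
exact: mulrl_measurable.
Qed.

Lemma E_clamp (F : R -> R) : measurable_fun [set: R] F ->
  ('E_P[fun w => F (Lam w)] = 'E_P[fun w => F (clamp (Lam w))])%E.
Proof.
move=> mF; rewrite unlock; apply: ae_eq_integral => //.
- apply/measurable_EFinP; apply: (measurableT_comp mF); exact: measurable_funPT.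
- apply/measurable_EFinP; apply: (measurableT_comp mF).
  apply: (measurableT_comp mclamp); exact: measurable_funPT.
- by apply: filterS hae => w hw _; rewrite clamp_id.
Qed.


Definition hq (q : R) (w : T) := Wsys mu (q * clamp (Lam w)).

Lemma mhq q : measurable_fun [set: T] (hq q).
Proof.
apply: (measurableT_comp (mWq q)); apply: (measurableT_comp mclamp).
exact: measurable_funPT.
Qed.

Lemma Wsys_bnd q x : 0 <= q <= 1 -> 0 <= x <= lmax ->
  mu^-1 <= Wsys mu (q * x) <= (mu - lmax)^-1.
Proof.
case/andP=> q0 q1 /andP[x0 xl].
have qx0 : 0 <= q * x by rewrite mulr_ge0.
have qxl : q * x <= lmax.
  by apply: (le_trans _ xl); rewrite -[X in _ <= X]mul1r ler_wpM2r.
have ml : 0 < mu - lmax by rewrite subr_gt0.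
have mqx : 0 < mu - q * x by rewrite subr_gt0 (le_lt_trans qxl).
rewrite /Wsys div1r; apply/andP; split.
  have mu0 : 0 < mu by apply: le_lt_trans l0 lmu.
  by rewrite lef_pV2 ?posrE // gerBl.
by rewrite lef_pV2 ?posrE // lerB.
Qed.

Lemma hq_bnd q w : 0 <= q <= 1 -> mu^-1 <= hq q w <= (mu - lmax)^-1.
Proof. by move=> hq0; apply: Wsys_bnd => //; rewrite clamp_ge0 clamp_le. Qed.

Lemma Lfun_bnd (f : T -> R) (M : R) : measurable_fun [set: T] f ->
  (forall w, `|f w| <= M) -> f \in Lfun P 1.
Proof.
move=> mf fM; apply/Lfun1_integrable.
apply: measurable_bounded_integrable => //.
  by apply: (le_lt_trans (probability_le1 P measurableT)); rewrite ltry.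
exists M; split; first by rewrite num_real.
move=> N MN w _ /=; exact: (le_trans (fM w) (ltW MN)).
Qed.

Definition eh (q : R) := fine ('E_P[hq q])%E.

Lemma Lfun_hq q : 0 <= q <= 1 -> hq q \in Lfun P 1.
Proof.
move=> hq0; apply: (@Lfun_bnd _ (mu - lmax)^-1); first exact: mhq.
move=> w; have /andP[h1 h2] := hq_bnd q w hq0.
have mu0 : 0 < mu by apply: le_lt_trans l0 lmu.
rewrite ger0_norm //; apply: le_trans h1; rewrite ltW // invr_gt0.
by [].
Qed.

Lemma Eh q : 0 <= q <= 1 -> ('E_P[hq q] = (eh q)%:E)%E.
Proof. by move=> hq0; rewrite /eh fineK // expectation_fin_num // Lfun_hq. Qed.

Lemma EW_eq q : EW Lam mu q = eh q.
Proof. by rewrite /EW (E_clamp _ (mWq q)). Qed.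

Lemma Rev_eq lam Rw C q : 0 <= q <= 1 ->
  RevS Lam lam mu Rw C q = q * lam * (Rw - C * eh q).
Proof.
move=> hq0.
have mF : measurable_fun [set: R] (fun x => Rw - C * Wsys mu (q * x)).
  apply: (measurable_funB (f := cst Rw) (g := fun x => C * Wsys mu (q * x))) => //.
  apply: (measurableT_comp (f := fun y => C * y) (g := fun x => Wsys mu (q * x))).
    exact: mulrl_measurable.
  exact: mWq.
rewrite /RevS (E_clamp _ mF).
have -> : (fun w => Rw - C * Wsys mu (q * clamp (Lam w))) = cst Rw \- (C \o* hq q).
  by apply: boolp.funext => w /=; rewrite mulrC.
rewrite (expectationB (X := cst Rw) (Y := C \o* hq q)).
- rewrite expectation_cst (expectationZl (X := hq q)); last exact: Lfun_hq.
  by rewrite (Eh q hq0) -EFinM -EFinB.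
- exact: Lfun_cst.
apply: (@Lfun_bnd _ (`|C| * (mu - lmax)^-1)).
  change (measurable_fun [set: T] ((fun y => y * C) \o hq q)).
  apply: measurableT_comp.
    exact: mulrr_measurable.
  exact: mhq.
move=> w; have /andP[h1 h2] := hq_bnd q w hq0.
have mu0 : 0 < mu by apply: le_lt_trans l0 lmu.
rewrite /= normrM mulrC ler_wpM2l //.
rewrite ger0_norm //; apply: le_trans h1; rewrite ltW // invr_gt0.
by [].
Qed.

Lemma key q qe : 0 <= qe -> qe <= q -> q <= 1 ->
  eh qe + (q - qe) * ((mu - lmax) / mu) * (eh 1 - mu^-1) <= eh q.
Proof.
move=> qe0 qeq q1.
have mu0 : 0 < mu by apply: le_lt_trans l0 lmu.
have hqe : 0 <= qe <= 1 by rewrite qe0 (le_trans qeq q1).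
have hqq : 0 <= q <= 1 by rewrite q1 (le_trans qe0 qeq).
have h1 : 0 <= (1:R) <= 1 by rewrite ler01 lexx.
set k := (q - qe) * ((mu - lmax) / mu).
have k0 : 0 <= k by rewrite /k mulr_ge0 ?subr_ge0 // divr_ge0 ?subr_ge0 // ltW.
have L1 : (hq 1 \- cst mu^-1) \in Lfun P 1.
  by apply: rpredB; [exact: Lfun_hq | exact: Lfun_cst].
have L2 : (k \o* (hq 1 \- cst mu^-1)) \in Lfun P 1.
  by apply: Lfun_scale => //; exact: lexx.
have F : ('E_P[(hq qe \+ k \o* (hq 1 \- cst mu^-1))%R] <= 'E_P[hq q])%E.
  apply: expectation_le.
  - apply: measurable_funD; first exact: mhq.
    change (measurable_fun [set: T] ((fun y => y * k) \o (hq 1 \- cst mu^-1))).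
    apply: measurableT_comp; first exact: mulrr_measurable.
    by apply: measurable_funB => //; exact: mhq.
  - exact: mhq.
  - move=> w /=; have /andP[a1 _] := hq_bnd qe w hqe.
    have /andP[b1 _] := hq_bnd 1 w h1.
    apply: addr_ge0; first by apply: le_trans a1; rewrite ltW // invr_gt0.
    by apply: mulr_ge0 => //; rewrite subr_ge0.
  - move=> w; have /andP[a1 _] := hq_bnd q w hqq.
    by apply: le_trans a1; rewrite ltW // invr_gt0.
  - apply: aeW => w /=.
    have := pw_key mu lmax q qe (clamp (Lam w)) l0 lmu qe0 qeq q1 (clamp_ge0 (Lam w)) (clamp_le (Lam w)).
    by rewrite /hq -/k [_ * k]mulrC.
rewrite (expectationD (X := hq qe)) ?Lfun_hq // in F.
rewrite (expectationZl (X := hq 1 \- cst mu^-1)) // in F.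
rewrite (expectationB (X := hq 1)) ?Lfun_hq ?Lfun_cst // in F.
rewrite expectation_cst (Eh qe hqe) (Eh 1 h1) (Eh q hqq) in F.
by rewrite -EFinB -EFinM -EFinD lee_fin in F.
Qed.
End main.

Theorem proposition1 (d : measure_display) (T : measurableType d) (R : realType)
  (P : probability T R) (Lam : {RV P >-> R})
  (lam mu Rw C lmin lmax : R) :
  0 < lam -> 0 < C -> C / mu <= Rw ->
  0 <= lmin -> lmin < lam -> lam < lmax -> lmax < mu ->
  rv_support Lam lmin -> (forall x, rv_support Lam x -> lmin <= x) ->
  rv_support Lam lmax -> (forall x, rv_support Lam x -> x <= lmax) ->
  forall qm qe : R,
  is_qSm Lam lam mu Rw C qm -> is_qSe Lam mu Rw C qe ->
  qm <= qe.
Proof.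
move=> lam0 C0 CRw lmin0 lminlam lamlmax lmaxmu smin hmin smax hmax qm qe [hqm Hm] He.
have l0 : 0 <= lmax by lra.
have mu0 : 0 < mu by lra.
have hup := @supp_upper R (distribution P Lam) lmax hmax.
have hlo := @supp_lower R (distribution P Lam) lmin hmin.
have hae : \forall w \ae P, 0 <= Lam w <= lmax.
  exists (Lam @^-1` `]-oo, lmin[ `|` Lam @^-1` `]lmax, +oo[); split.
  - by apply: measurableU; apply: measurable_funPTI; exact: measurable_itv.
  - apply: null_set_setU; try (apply: measurable_funPTI; exact: measurable_itv).
      exact: hlo.
    exact: hup.
  - move=> w /= hw.
    have [wl|wl] := ltP (Lam w) lmin.
      by left; rewrite /= in_itv /= wl.
    right; rewrite /= in_itv /= andbT ltNge; apply/negP => wm; apply: hw.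
    by rewrite wm andbT (le_trans lmin0 wl).
case: He => [[_ ->]|[hneg [hqe Ce]]]; first by case/andP: hqm.
rewrite leNgt; apply/negP => qeqm.
case/andP: (hqe) => qe0 qe1; case/andP: (hqm) => qm0 qm1.
have := Hm qe hqe.
rewrite (Rev_eq _ _ _ _ _ mu lmax l0 lmaxmu hae lam Rw C qe hqe) (Rev_eq _ _ _ _ _ mu lmax l0 lmaxmu hae lam Rw C qm hqm).
rewrite (EW_eq _ _ _ _ _ mu lmax hae) in Ce.
rewrite (EW_eq _ _ _ _ _ mu lmax hae) in hneg.
have K := key _ _ _ _ Lam mu lmax l0 lmaxmu qm qe qe0 (ltW qeqm) qm1.
set A := eh _ _ _ _ _ _ _ qe in Ce K *; set B := eh _ _ _ _ _ _ _ qm in K *.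
set E := eh _ _ _ _ _ _ _ 1 in hneg K.
have kpos : 0 < (mu - lmax) / mu by rewrite divr_gt0 // subr_gt0.
have Emu : mu^-1 < E.
  have : C / mu < C * E by lra.
  by rewrite ltr_pM2l.
have dpos : 0 < (qm - qe) * ((mu - lmax) / mu) * (E - mu^-1).
  by apply: mulr_gt0; [apply: mulr_gt0 => //; rewrite subr_gt0 | rewrite subr_gt0].
have BA : A < B by lra.
have neg : Rw - C * B < 0 by nra.
have qm0' : 0 < qm by lra.
have : qm * lam * (Rw - C * B) < 0.
  by rewrite pmulr_rlt0 // mulr_gt0.
rewrite Ce subrr mulr0; lra.
Qed.
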